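(* Let $0<\alpha\leq 1/2$. Then the equation $$\cos(2\pi\alpha) =\cos(2\pi\sqrt{\lambda}) - \frac{1-\sqrt{1-4\lambda}}{4\sqrt{\lambda}}\, \sin(2\pi\sqrt{\lambda})$$ has a unique solution $\lambda=\lambda_*(\alpha)$ in the interval $(0,\alpha^2)$. *)

(* Defs.v *)
From Stdlib Require Import Reals.
Open Scope R_scope.

Definition rhs (lam : R) : R :=
  cos (2 * PI * sqrt lam)
  - (1 - sqrt (1 - 4 * lam)) / (4 * sqrt lam) * sin (2 * PI * sqrt lam).

(* Main.v *)
Require Import Defs.
From Stdlib Require Import Reals Lra Psatz Ranalysis5.
Open Scope R_scope.

Definition cc (s : R) : R := s / (1 + sqrt (Rabs (1 - 4 * s ^ 2))).
Definition G (s : R) : R := cos (2 * PI * s) - cc s * sin (2 * PI * s).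

Lemma sin_lb_eq x : sin_lb x = x - x^3/6 + x^5/120 - x^7/5040.
Proof.
  unfold sin_lb, sin_approx. cbn [sum_f_R0]. unfold sin_term.
  rewrite !INR_IZR_INZ. cbn -[pow IZR]. field.
Qed.

Lemma sin_ge_cubic x : 0 <= x <= 3 -> x - x^3/6 <= sin x.
Proof.
  intros Hx. pose proof PI2_3_2 as Hp.
  destruct (SIN x ltac:(lra) ltac:(lra)) as [H _].
  rewrite sin_lb_eq in H.
  assert (x^7/5040 <= x^5/120).
  { assert (0 <= x^5) by (apply pow_le; lra).
    replace (x^7) with (x^5 * x^2) by ring.
    assert (x^5 * x^2 <= x^5 * 42) by (apply Rmult_le_compat_l; nra). lra. }
  lra.
Qed.

Lemma pi_bounds : 3 < PI < 32/10.
Proof.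
  pose proof PI2_3_2. split; [lra|].
  destruct (Rle_lt_dec (16/10) (PI/2)) as [H1|H1]; [|lra].
  exfalso.
  assert (0 <= cos (16/10)) by (apply cos_ge_0; lra).
  replace (16/10) with (2 * (8/10)) in H0 by lra.
  rewrite cos_2a_sin in H0.
  pose proof (sin_ge_cubic (8/10) ltac:(lra)). nra.
Qed.

Lemma rhs_G (s : R) : 0 < s < 1/2 -> rhs (s ^ 2) = G s.
Proof.
  intros Hs. unfold rhs, G, cc.
  rewrite sqrt_pow2 by lra.
  rewrite Rabs_pos_eq by nra.
  assert (Hr : 0 <= sqrt (1 - 4 * s^2)) by apply sqrt_pos.
  assert (Hr2 : sqrt (1 - 4 * s^2) * sqrt (1 - 4 * s^2) = 1 - 4 * s^2) by (apply sqrt_sqrt; nra).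
  replace ((1 - sqrt (1 - 4 * s ^ 2)) / (4 * s)) with (s / (1 + sqrt (1 - 4 * s ^ 2))); [reflexivity|].
  field_simplify_eq; try lra.
Qed.

Lemma cc_pos s : 0 < s -> 0 < cc s.
Proof. intros; unfold cc. pose proof (sqrt_pos (Rabs (1 - 4 * s ^ 2))).
  apply Rdiv_lt_0_compat; lra. Qed.

Lemma cc_mono s u : 0 <= s < u -> u <= 1/2 -> cc s < cc u.
Proof.
  intros Hs Hu. unfold cc.
  rewrite !Rabs_pos_eq by nra.
  assert (sqrt (1 - 4*u^2) <= sqrt (1 - 4*s^2)) by (apply sqrt_le_1_alt; nra).
  pose proof (sqrt_pos (1 - 4 * u ^ 2)).
  apply (Rlt_le_trans _ (u / (1 + sqrt (1 - 4 * s ^ 2)))).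
  - unfold Rdiv; apply Rmult_lt_compat_r; [|lra]. apply Rinv_0_lt_compat; lra.
  - unfold Rdiv; apply Rmult_le_compat_l; [lra|]. apply Rinv_le_contravar; lra.
Qed.

Definition a0 := 43/100.

Lemma cc_a0 : 28/100 <= cc a0 <= 29/100.
Proof.
  unfold cc, a0. rewrite Rabs_pos_eq by lra.
  set (r := sqrt _).
  assert (Hr : r * r = 1 - 4 * (43/100)^2) by (apply sqrt_sqrt; lra).
  assert (0 <= r) by apply sqrt_pos.
  assert (51/100 <= r <= 52/100) by nra.
  assert (Hq : 43/100/(1+r) * (1+r) = 43/100) by (field; lra).
  set (q := 43/100/(1+r)) in *. nra.
Qed.

Lemma cos_PI_minus' x : cos (PI - x) = - cos x.
Proof. rewrite cos_minus, cos_PI, sin_PI. ring. Qed.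

Lemma cos_ge_quad z : 0 <= z -> 1 - z^2/2 <= cos z.
Proof.
  intros Hz. assert (Ez : cos z = cos (2 * (z/2))) by (f_equal; field). rewrite Ez.
  rewrite cos_2a_sin.
  destruct (Req_dec z 0) as [->|Hz0].
  - replace (0/2) with 0 by field. rewrite sin_0. lra.
  - assert (sin (z/2) < z/2) by (apply sin_lt_x; lra).
    assert (- (z/2) < sin (z/2)).
    { pose proof (sin_lt_x (z/2) ltac:(lra)). 
      destruct (Rle_lt_dec (z/2) PI).
      - assert (0 <= sin (z/2)) by (apply sin_ge_0; lra). lra.
      - pose proof (SIN_bound (z/2)). pose proof pi_bounds. lra. }
    nra.
Qed.

Lemma cc_nonneg s : 0 <= s -> 0 <= cc s.
Proof. intros; unfold cc. pose proof (sqrt_pos (Rabs (1 - 4 * s ^ 2))).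
  apply Rmult_le_pos; [lra|]. left; apply Rinv_0_lt_compat; lra. Qed.

Lemma G_below s : a0 <= s < 1/2 -> G s < -1.
Proof.
  intros Hs. pose proof pi_bounds as Hpi. unfold a0 in Hs.
  set (z := PI * (1/2 - s)).
  assert (Hz : 0 < z <= 224/1000) by (unfold z; nra).
  assert (Hk : 28/100 <= cc s).
  { pose proof cc_a0. destruct (Req_dec s a0) as [->|Hne]; [lra|].
    assert (cc a0 < cc s) by (apply cc_mono; unfold a0 in *; lra). lra. }
  unfold G. replace (2 * PI * s) with (PI - 2 * z) by (unfold z; field).
  rewrite cos_PI_minus', sin_PI_x, cos_2a_sin, sin_2a.
  assert (0 < sin z) by (apply sin_gt_0; lra).
  assert (sin z < z) by (apply sin_lt_x; lra).
  pose proof (cos_ge_quad z ltac:(lra)).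
  assert (97/100 <= cos z) by nra.
  assert (sin z < cc s * cos z) by nra.
  nra.
Qed.

Lemma sin_big y : 42/100 <= y <= PI/2 -> 4/10 <= sin y.
Proof.
  intros Hy. pose proof pi_bounds.
  assert (sin (42/100) <= sin y) by (apply sin_incr_1; lra).
  pose proof (sin_ge_cubic (42/100) ltac:(lra)). lra.
Qed.

Lemma G_dec s u : 0 <= s < u -> u <= a0 -> G u < G s.
Proof.
  intros Hs Hu. pose proof pi_bounds as Hpi. unfold a0 in Hu.
  assert (Hk : 0 <= cc s <= 29/100).
  { pose proof cc_a0. split; [apply cc_nonneg; lra|].
    destruct (Req_dec u a0) as [->|Hne].
    - assert (cc s < cc a0) by (apply cc_mono; unfold a0; lra). lra.
    - assert (cc s < cc u) by (apply cc_mono; lra).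
      assert (cc u < cc a0) by (apply cc_mono; unfold a0 in *; lra). lra. }
  assert (Hcu : cc s < cc u) by (apply cc_mono; lra).
  unfold G.
  set (p := 2 * PI * s). set (q := 2 * PI * u).
  assert (Hd : cos p - cos q = 2 * sin ((q - p)/2) * sin ((p + q)/2)).
  { rewrite form2. replace ((p - q)/2) with (- ((q-p)/2)) by field. rewrite sin_neg. ring. }
  assert (Hs2 : sin p - sin q = - 2 * cos ((p + q)/2) * sin ((q - p)/2)).
  { rewrite form4. replace ((p - q)/2) with (- ((q-p)/2)) by field. rewrite sin_neg. ring. }
  assert (Hsd : 0 < sin ((q - p)/2)) by (apply sin_gt_0; unfold p, q; nra).
  assert (Hsq : 0 < sin q) by (apply sin_gt_0; unfold q; nra).
  set (m := (p + q)/2) in *.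
  assert (Hm : 0 < m <= 2 * PI * (43/100)) by (unfold m, p, q; nra).
  assert (Key : 0 <= sin m + cc s * cos m).
  { destruct (Rle_lt_dec 0 (cos m)) as [Hc|Hc].
    - assert (0 <= sin m) by (apply sin_ge_0; lra). nra.
    - assert (PI/2 < m).
      { destruct (Rle_lt_dec m (PI/2)); [|lra].
        assert (0 <= cos m) by (apply cos_ge_0; lra). lra. }
      rewrite <- (sin_PI_x m).
      pose proof (sin_big (PI - m) ltac:(lra)).
      pose proof (COS_bound m). nra. }
  nra.
Qed.

Lemma cont_lin (k : R) x : continuity_pt (fun s => k * s) x.
Proof.
  apply (continuity_pt_mult (fun _ => k) (fun s => s)).
  - apply continuity_pt_const; intros ??; reflexivity.
  - apply derivable_continuous_pt, derivable_pt_id.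
Qed.

Lemma G_cont x : continuity_pt G x.
Proof.
  assert (Hcos : continuity_pt (fun s => cos (2 * PI * s)) x).
  { apply (continuity_pt_comp (fun s => 2 * PI * s) cos). apply cont_lin.
    apply continuity_cos. }
  assert (Hsin : continuity_pt (fun s => sin (2 * PI * s)) x).
  { apply (continuity_pt_comp (fun s => 2 * PI * s) sin). apply cont_lin.
    apply continuity_sin. }
  assert (Hq : continuity_pt (fun s => 1 - 4 * s ^ 2) x).
  { apply (continuity_pt_minus (fun _ => 1) (fun s => 4 * s ^ 2)).
    - apply continuity_pt_const; intros ??; reflexivity.
    - apply (continuity_pt_mult (fun _ => 4) (fun s => s ^ 2)).
      + apply continuity_pt_const; intros ??; reflexivity.
      + apply derivable_continuous_pt, derivable_pt_pow. }
  assert (Hr : continuity_pt (fun s => 1 + sqrt (Rabs (1 - 4 * s ^ 2))) x).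
  { apply (continuity_pt_plus (fun _ => 1) (fun s => sqrt (Rabs (1 - 4 * s ^ 2)))).
    - apply continuity_pt_const; intros ??; reflexivity.
    - apply (continuity_pt_comp (fun s => Rabs (1 - 4 * s ^ 2)) sqrt).
      + apply (continuity_pt_comp (fun s => 1 - 4 * s ^ 2) Rabs). exact Hq.
        apply Rcontinuity_abs.
      + apply continuity_pt_sqrt, Rabs_pos. }
  assert (Hc : continuity_pt cc x).
  { apply (continuity_pt_div (fun s => s) (fun s => 1 + sqrt (Rabs (1 - 4 * s ^ 2)))).
    - apply derivable_continuous_pt, derivable_pt_id.
    - exact Hr.
    - pose proof (sqrt_pos (Rabs (1 - 4 * x ^ 2))). lra. }
  apply (continuity_pt_minus (fun s => cos (2 * PI * s)) (fun s => cc s * sin (2 * PI * s))).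
  exact Hcos.
  apply (continuity_pt_mult cc (fun s => sin (2 * PI * s))); assumption.
Qed.

Lemma G_inj s u : 0 <= s < a0 -> 0 <= u < a0 -> G s = G u -> s = u.
Proof.
  intros Hs Hu He. destruct (Rtotal_order s u) as [H|[H|H]]; auto.
  - pose proof (G_dec s u ltac:(lra) ltac:(lra)). lra.
  - pose proof (G_dec u s ltac:(lra) ltac:(lra)). lra.
Qed.

Theorem lemma4p1 (alpha : R) (Ha0 : 0 < alpha) (Ha1 : alpha <= 1 / 2) :
  exists! lam : R, 0 < lam < alpha ^ 2 /\ cos (2 * PI * alpha) = rhs lam.
Proof.
  pose proof pi_bounds as Hpi.
  set (t := cos (2 * PI * alpha)).
  assert (Ht1 : t < 1).
  { unfold t. replace (2 * PI * alpha) with (2 * (PI * alpha)) by ring.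
    rewrite cos_2a_sin. assert (0 < sin (PI * alpha)) by (apply sin_gt_0; nra). nra. }
  assert (Ht2 : -1 <= t) by (apply COS_bound).
  assert (HG0 : G 0 = 1).
  { unfold G, cc. rewrite Rmult_0_r, cos_0, sin_0. field.
    pose proof (sqrt_pos (Rabs (1 - 4 * 0 ^ 2))). lra. }
  assert (Hex : exists b, 0 < b <= alpha /\ b <= 1/2 /\ G b < t).
  { destruct (Rlt_le_dec alpha (1/2)) as [Hl|Hl].
    - exists alpha. split; [lra|split; [lra|]].
      unfold G, t. assert (0 < cc alpha) by (apply cc_pos; lra).
      assert (0 < sin (2 * PI * alpha)) by (apply sin_gt_0; nra). nra.
    - exists a0. unfold a0 in *. split; [lra|split; [lra|]].
      assert (alpha = 1/2) by lra. subst t. rewrite H.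
      replace (2 * PI * (1/2)) with PI by field. rewrite cos_PI.
      apply G_below. unfold a0; lra. }
  destruct Hex as [b [Hb1 [Hb2 Hb3]]].
  destruct (IVT_interv (fun s => t - G s) 0 b) as [z [Hz1 Hz2]].
  - intros y _. apply (continuity_pt_minus (fun _ => t) G).
    + apply continuity_pt_const; intros ??; reflexivity.
    + apply G_cont.
  - lra.
  - simpl. lra.
  - simpl. lra.
  - simpl in Hz2.
    assert (Hz0 : z <> 0) by (intros ->; lra).
    assert (Hzb : z <> b) by (intros ->; lra).
    assert (Hzr : 0 < z < 1/2) by lra.
    assert (Hza : z < a0).
    { destruct (Rlt_le_dec z a0); auto. pose proof (G_below z ltac:(lra)). lra. }
    exists (z ^ 2). split.
    + split; [split; nra|]. rewrite rhs_G by lra. lra.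
    + intros lam [[Hl1 Hl2] Hl3].
      set (s := sqrt lam).
      assert (Hs0 : 0 < s) by (apply sqrt_lt_R0; lra).
      assert (Hls : lam = s ^ 2) by (unfold s; rewrite pow2_sqrt; lra).
      assert (Hsa : s < alpha).
      { destruct (Rlt_le_dec s alpha); auto. nra. }
      rewrite Hls in Hl3. rewrite rhs_G in Hl3 by lra.
      assert (Hsa0 : s < a0).
      { destruct (Rlt_le_dec s a0); auto. pose proof (G_below s ltac:(lra)). lra. }
      rewrite Hls. f_equal. apply G_inj; lra.
Qed.
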